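(* Let $n\ge3$, $N=2n+1$, $R=2n$, and for $r\in[R]$ let $F_r:2^{[N]}\to\mathbb{R}$ be given by $F_r(S)=1$ if $|S\cap\{r,r+1\}|=1$ and $F_r(S)=0$ otherwise (so $F_r$ is incident exactly to $\{r,r+1\}$, and $\|\mu\|_1=4n$). For this instance, let $\ell_*$ be the supremum of all $\ell\ge0$ such that for every $y\in\mathcal{B}$, $\|Ay-Ay^*\|_2^2\ge\ell\,\|y^*-y\|_2^2$, where $y^*=\arg\min_{z\in\Xi}\|z-y\|_2^2$. Then $\ell_*<7/N^2$.
   Context: For each $r$, $\mathcal{B}_r=\{u\in\mathbb{R}^N:\sum_{i\in S}u_i\le F_r(S)\ \forall S\subseteq[N],\ \sum_{i\in[N]}u_i=F_r([N])\}$ is the base polytope of $F_r$, $\mathcal{B}=\mathcal{B}_1\times\cdots\times\mathcal{B}_R\subseteq(\mathbb{R}^N)^R$, and $A:(\mathbb{R}^N)^R\to\mathbb{R}^N$, $Ay=\sum_ry_r$; $\|y\|_2^2=\sum_r\|y_r\|_2^2$. $\Xi$ is the set of minimizers of $\|Ay\|_2^2$ over $\mathcal{B}$. $\mu_i$ is the number of $r$ such that $F_r$ depends on element $i$. *)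

(* Defs.v *)
From Stdlib Require Import Reals List Arith.
Import ListNotations.
Open Scope R_scope.

Definition sumN (m : nat) (f : nat -> R) : R :=
  fold_right Rplus 0 (map f (seq 0 m)).

(* Instance parameters (0-based indices): ground set [N] = {0,...,N-1},
   components r in {0,...,R-1}. *)
Definition Nn (n : nat) : nat := (2 * n + 1)%nat.
Definition Rn (n : nat) : nat := (2 * n)%nat.

(* Subsets of the ground set are boolean predicates on nat (only the values
   on {0,...,N-1} matter).  F_r(S) = 1 iff |S ∩ {r, r+1}| = 1. *)
Definition Fr (r : nat) (S : nat -> bool) : R :=
  if xorb (S r) (S (r + 1)%nat) then 1 else 0.

Definition in_base (n r : nat) (u : nat -> R) : Prop :=
  (forall S : nat -> bool,
      sumN (Nn n) (fun i => if S i then u i else 0) <= Fr r S) /\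
  sumN (Nn n) u = Fr r (fun i => Nat.ltb i (Nn n)).

(* y in (R^N)^R is a function y r i. *)
Definition inB (n : nat) (y : nat -> nat -> R) : Prop :=
  forall r, (r < Rn n)%nat -> in_base n r (y r).

Definition Aop (n : nat) (y : nat -> nat -> R) : nat -> R :=
  fun i => sumN (Rn n) (fun r => y r i).

Definition nsqN (n : nat) (v : nat -> R) : R :=
  sumN (Nn n) (fun i => (v i) ^ 2).

Definition dist2 (n : nat) (y z : nat -> nat -> R) : R :=
  sumN (Rn n) (fun r => sumN (Nn n) (fun i => (y r i - z r i) ^ 2)).

Definition inXi (n : nat) (z : nat -> nat -> R) : Prop :=
  inB n z /\ forall y, inB n y -> nsqN n (Aop n z) <= nsqN n (Aop n y).

Definition is_proj (n : nat) (ys y : nat -> nat -> R) : Prop :=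
  inXi n ys /\ forall z, inXi n z -> dist2 n ys y <= dist2 n z y.

Definition admissible (n : nat) (l : R) : Prop :=
  0 <= l /\
  forall y ys, inB n y -> is_proj n ys y ->
    nsqN n (fun i => Aop n y i - Aop n ys i) >= l * dist2 n ys y.

(* Main.v *)
Require Import Defs.
From Stdlib Require Import Reals Lra Lia List Arith.
Import ListNotations.
Open Scope R_scope.

Lemma fr_acc a l : fold_right Rplus a l = fold_right Rplus 0 l + a.
Proof. induction l; simpl; [lra|rewrite IHl; lra]. Qed.

Lemma sumN_S m f : sumN (S m) f = sumN m f + f m.
Proof. unfold sumN. rewrite seq_S, map_app, fold_right_app. simpl.
  rewrite fr_acc. lra. Qed.

Lemma sumN_front m f : sumN (S m) f = f 0%nat + sumN m (fun k => f (S k)).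
Proof. unfold sumN. simpl. rewrite <- seq_shift, map_map. reflexivity. Qed.

Lemma sumN_ext m f g : (forall i, (i < m)%nat -> f i = g i) -> sumN m f = sumN m g.
Proof. induction m; intros H; [reflexivity|]. rewrite !sumN_S, IHm, H; auto. Qed.

Lemma sumN_plus m f g : sumN m (fun i => f i + g i) = sumN m f + sumN m g.
Proof. induction m; [unfold sumN; simpl; lra|]. rewrite !sumN_S, IHm; lra. Qed.

Lemma sumN_scal m c f : sumN m (fun i => c * f i) = c * sumN m f.
Proof. induction m; [unfold sumN; simpl; lra|]. rewrite !sumN_S, IHm; lra. Qed.

Lemma sumN_const m c : sumN m (fun _ => c) = INR m * c.
Proof. induction m; [unfold sumN; simpl; lra|]. rewrite !sumN_S, IHm, S_INR; lra. Qed.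

Lemma sumN_nonneg m f : (forall i, (i < m)%nat -> 0 <= f i) -> 0 <= sumN m f.
Proof. induction m; intros H; [unfold sumN; simpl; lra|]. rewrite sumN_S.
  assert (0 <= f m) by auto. assert (0 <= sumN m f) by auto. lra. Qed.

Lemma sumN_le m f g : (forall i, (i < m)%nat -> f i <= g i) -> sumN m f <= sumN m g.
Proof. induction m; intros H; [unfold sumN; simpl; lra|]. rewrite !sumN_S.
  assert (f m <= g m) by auto. assert (sumN m f <= sumN m g) by auto. lra. Qed.

Lemma sumN_add a b f : sumN (a + b) f = sumN a f + sumN b (fun k => f (a + k)%nat).
Proof. induction b. rewrite Nat.add_0_r. unfold sumN at 3; simpl; lra.
  rewrite Nat.add_succ_r, !sumN_S, IHb. lra. Qed.

Lemma sumN_pt m f a : (forall j, (j < m)%nat -> j <> a -> f j = 0) ->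
  sumN m f = if Nat.ltb a m then f a else 0.
Proof. induction m; intros H. reflexivity.
  rewrite sumN_S, IHm by auto.
  destruct (Nat.eq_dec a m).
  - subst. rewrite Nat.ltb_irrefl. destruct (Nat.ltb_spec m (S m)); [lra|lia].
  - rewrite (H m) by auto. destruct (Nat.ltb_spec a m), (Nat.ltb_spec a (S m)); try lia; lra.
Qed.

Lemma sumN_two m f a b : a <> b -> (forall j, (j < m)%nat -> j <> a -> j <> b -> f j = 0) ->
  sumN m f = (if Nat.ltb a m then f a else 0) + (if Nat.ltb b m then f b else 0).
Proof. intros Hab H.
  rewrite (sumN_ext m f (fun j => (if Nat.eqb j a then f j else 0) + (if Nat.eqb j a then 0 else f j))).
  2:{ intros i _. destruct (Nat.eqb i a); lra. }
  rewrite sumN_plus.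
  rewrite (sumN_pt m _ a), (sumN_pt m _ b).
  - rewrite Nat.eqb_refl. assert (E: Nat.eqb b a = false) by (apply Nat.eqb_neq; auto).
    rewrite E. reflexivity.
  - intros j Hj Hjb. destruct (Nat.eqb_spec j a). lra. apply H; auto.
  - intros j Hj Hja. apply Nat.eqb_neq in Hja. rewrite Hja. reflexivity.
Qed.

Lemma sumsq_zero m f : sumN m (fun i => f i ^ 2) <= 0 -> forall i, (i < m)%nat -> f i = 0.
Proof. induction m; intros H i Hi. lia.
  rewrite sumN_S in H.
  assert (0 <= sumN m (fun i => f i ^ 2)) by (apply sumN_nonneg; intros; apply pow2_ge_0).
  assert (0 <= f m ^ 2) by apply pow2_ge_0.
  destruct (Nat.eq_dec i m). subst. nra. apply IHm; [lra|lia].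
Qed.
Lemma Fr_all n r : (r < Rn n)%nat -> Fr r (fun i => Nat.ltb i (Nn n)) = 0.
Proof. intros Hr. unfold Fr, Rn, Nn in *.
  assert (E1: Nat.ltb r (2*n+1) = true) by (apply Nat.ltb_lt; lia).
  assert (E2: Nat.ltb (r+1) (2*n+1) = true) by (apply Nat.ltb_lt; lia).
  rewrite E1, E2. reflexivity. Qed.

Lemma Fr_nonneg r S : 0 <= Fr r S.
Proof. unfold Fr. destruct (xorb _ _); lra. Qed.

Lemma base_char n r u : (r < Rn n)%nat -> in_base n r u ->
  (forall i, (i < Nn n)%nat -> i <> r -> i <> (r+1)%nat -> u i = 0) /\ u (r+1)%nat = - u r.
Proof. intros Hr [HS Hsum]. rewrite Fr_all in Hsum by auto.
  assert (Hoff: forall i, (i < Nn n)%nat -> i <> r -> i <> (r+1)%nat -> u i = 0).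
  { intros i Hi H1 H2.
    assert (A := HS (fun j => Nat.eqb j i)).
    rewrite (sumN_pt _ _ i) in A.
    2:{ intros j _ Hj. apply Nat.eqb_neq in Hj. rewrite Hj. reflexivity. }
    rewrite Nat.eqb_refl in A. apply Nat.ltb_lt in Hi as Hi'. rewrite Hi' in A.
    unfold Fr in A. assert (E1: Nat.eqb r i = false) by (apply Nat.eqb_neq; auto).
    assert (E2: Nat.eqb (r+1) i = false) by (apply Nat.eqb_neq; auto).
    rewrite E1, E2 in A. simpl in A.
    assert (B := HS (fun j => negb (Nat.eqb j i))).
    unfold Fr in B. rewrite E1, E2 in B. simpl in B.
    assert (C: sumN (Nn n) u = sumN (Nn n) (fun j => if Nat.eqb j i then u j else 0)
       + sumN (Nn n) (fun j => if negb (Nat.eqb j i) then u j else 0)).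
    { rewrite <- sumN_plus. apply sumN_ext. intros j _. destruct (Nat.eqb j i); simpl; lra. }
    rewrite (sumN_pt _ (fun j => if Nat.eqb j i then u j else 0) i) in C.
    2:{ intros j _ Hj. apply Nat.eqb_neq in Hj. rewrite Hj. reflexivity. }
    rewrite Nat.eqb_refl, Hi' in C. lra. }
  split; auto.
  rewrite (sumN_two _ _ r (r+1)%nat) in Hsum by (lia || (intros; apply Hoff; auto)).
  unfold Rn, Nn in *.
  assert (E1: Nat.ltb r (2*n+1) = true) by (apply Nat.ltb_lt; lia).
  assert (E2: Nat.ltb (r+1) (2*n+1) = true) by (apply Nat.ltb_lt; lia).
  rewrite E1, E2 in Hsum. lra.
Qed.

Definition zeroy : nat -> nat -> R := fun _ _ => 0.

Lemma Aop_zero n i : Aop n zeroy i = 0.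
Proof. unfold Aop, zeroy. rewrite sumN_const. lra. Qed.

Lemma zero_inB n : inB n zeroy.
Proof. intros r Hr. split.
  - intros S. unfold zeroy. rewrite (sumN_ext _ _ (fun _ => 0)).
    rewrite sumN_const. pose proof (Fr_nonneg r S). lra.
    intros i _. destruct (S i); reflexivity.
  - rewrite Fr_all by auto. unfold zeroy. rewrite sumN_const. lra.
Qed.

Lemma nsqN_nonneg n v : 0 <= nsqN n v.
Proof. apply sumN_nonneg. intros; apply pow2_ge_0. Qed.

Lemma Xi_zero n z : inXi n z -> forall r i, (r < Rn n)%nat -> (i < Nn n)%nat -> z r i = 0.
Proof. intros [HB Hmin].
  assert (HA: forall i, (i < Nn n)%nat -> Aop n z i = 0).
  { apply sumsq_zero. pose proof (Hmin zeroy (zero_inB n)). unfold nsqN in H at 2.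
    rewrite (sumN_ext _ _ (fun _ => 0)) in H. rewrite sumN_const in H. unfold nsqN in H. lra.
    intros i _. rewrite Aop_zero. simpl. lra. }
  assert (HC: forall r, (r < Rn n)%nat ->
    (forall i, (i < Nn n)%nat -> i <> r -> i <> (r+1)%nat -> z r i = 0) /\ z r (r+1)%nat = - z r r).
  { intros r Hr. apply base_char; auto. }
  assert (Hd: forall k, (k < Rn n)%nat -> z k k = 0).
  { induction k; intros Hk.
    - pose proof (HA 0%nat ltac:(unfold Nn, Rn in *; lia)) as H0. unfold Aop in H0.
      rewrite (sumN_pt _ _ 0%nat) in H0.
      + destruct (Nat.ltb_spec 0 (Rn n)); [auto|lia].
      + intros j Hj Hj0. apply (proj1 (HC j Hj)); unfold Nn, Rn in *; lia.
    - pose proof (HA (S k) ltac:(unfold Nn, Rn in *; lia)) as H0. unfold Aop in H0.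
      rewrite (sumN_two _ _ (S k) k) in H0.
      + destruct (Nat.ltb_spec (S k) (Rn n)); [|lia].
        destruct (Nat.ltb_spec k (Rn n)); [|lia].
        pose proof (proj2 (HC k ltac:(lia))). rewrite Nat.add_1_r in H2.
        rewrite H2, IHk in H0 by lia. lra.
      + lia.
      + intros j Hj H1 H2. apply (proj1 (HC j Hj)); unfold Nn, Rn in *; lia. }
  intros r i Hr Hi.
  destruct (Nat.eq_dec i r). subst; auto.
  destruct (Nat.eq_dec i (r+1)). subst. rewrite (proj2 (HC r Hr)), Hd; auto; lra.
  apply (proj1 (HC r Hr)); auto.
Qed.

Lemma proj_zero n y : is_proj n zeroy y.
Proof. split.
  - split. apply zero_inB. intros y' _.
    unfold nsqN at 1. rewrite (sumN_ext _ _ (fun _ => 0)). rewrite sumN_const.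
    pose proof (nsqN_nonneg n (Aop n y')). lra.
    intros i _. rewrite Aop_zero. simpl; lra.
  - intros z Hz. apply Req_le. unfold dist2. apply sumN_ext. intros r Hr.
    apply sumN_ext. intros i Hi. rewrite (Xi_zero n z Hz r i Hr Hi). reflexivity.
Qed.
Definition tt (n r : nat) : R :=
  if Nat.ltb r n then (INR r + 1) / INR n else (2 * INR n - INR r) / INR n.

Definition yw (n : nat) : nat -> nat -> R := fun r i =>
  if Nat.eqb i r then tt n r else if Nat.eqb i (r+1) then - tt n r else 0.

Lemma div_le1 a x : 0 < x -> a <= x -> a / x <= 1.
Proof. intros. unfold Rdiv. rewrite <- (Rinv_r x) by lra. apply Rmult_le_compat_r; [left; apply Rinv_0_lt_compat|]; lra. Qed.

Lemma tt_bounds n r : (3 <= n)%nat -> (r < 2 * n)%nat -> 0 <= tt n r <= 1.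
Proof. intros hn hr. assert (Hn: 3 <= INR n) by (replace 3 with (INR 3) by (simpl; lra); apply le_INR; lia).
  unfold tt. destruct (Nat.ltb_spec r n).
  - assert (INR r + 1 <= INR n) by (rewrite <- S_INR; apply le_INR; lia).
    assert (0 <= INR r) by apply pos_INR.
    split; [unfold Rdiv; apply Rmult_le_pos; [lra|left; apply Rinv_0_lt_compat; lra]|]. apply div_le1; lra.
  - assert (INR r + 1 <= 2 * INR n) by (rewrite <- S_INR; replace (2 * INR n) with (INR (2*n)) by (rewrite mult_INR; simpl; lra); apply le_INR; lia).
    assert (INR n <= INR r) by (apply le_INR; lia).
    split; [unfold Rdiv; apply Rmult_le_pos; [lra|left; apply Rinv_0_lt_compat; lra]|]. apply div_le1; lra.
Qed.

Lemma yw_inB n : (3 <= n)%nat -> inB n (yw n).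
Proof. intros hn r Hr. unfold Rn in Hr. pose proof (tt_bounds n r hn Hr).
  assert (Hoff: forall j, j <> r -> j <> (r+1)%nat -> yw n r j = 0).
  { intros j H1 H2. unfold yw. apply Nat.eqb_neq in H1. apply Nat.eqb_neq in H2.
    rewrite H1, H2. reflexivity. }
  assert (E1: Nat.ltb r (Nn n) = true) by (apply Nat.ltb_lt; unfold Nn; lia).
  assert (E2: Nat.ltb (r+1) (Nn n) = true) by (apply Nat.ltb_lt; unfold Nn; lia).
  assert (Y1: yw n r r = tt n r) by (unfold yw; rewrite Nat.eqb_refl; reflexivity).
  assert (Y2: yw n r (r+1) = - tt n r).
  { unfold yw. assert (E: Nat.eqb (r+1) r = false) by (apply Nat.eqb_neq; lia).
    rewrite E, Nat.eqb_refl. reflexivity. }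
  split.
  - intros S. rewrite (sumN_two _ _ r (r+1)%nat).
    + rewrite E1, E2, Y1, Y2. unfold Fr. destruct (S r), (S (r+1)%nat); simpl; lra.
    + lia.
    + intros j _ H1 H2. rewrite Hoff; auto. destruct (S j); reflexivity.
  - rewrite Fr_all by (unfold Rn; lia). rewrite (sumN_two _ _ r (r+1)%nat).
    + rewrite E1, E2, Y1, Y2. lra.
    + lia.
    + intros j _ H1 H2. apply Hoff; auto.
Qed.

Lemma sq_helper c x : 0 < x -> c ^ 2 <= 1 -> (c / x) ^ 2 <= 1 / x ^ 2.
Proof. intros Hx Hc. replace ((c/x)^2) with (c^2 * (1 / x^2)) by (field; lra).
  assert (0 < 1 / x^2) by (apply Rdiv_lt_0_compat; nra). nra. Qed.

Lemma Aop_yw_bound n i : (3 <= n)%nat -> (i < Nn n)%nat -> (Aop n (yw n) i) ^ 2 <= 1 / INR n ^ 2.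
Proof. intros hn Hi.
  assert (Hn: 3 <= INR n) by (replace 3 with (INR 3) by (simpl; lra); apply le_INR; lia).
  assert (Hn0: INR n <> 0) by lra.
  unfold Aop. destruct i as [|k].
  - rewrite (sumN_pt _ _ 0%nat).
    + destruct (Nat.ltb_spec 0 (Rn n)); [|unfold Rn in *; lia].
      unfold yw, tt. simpl. destruct (Nat.ltb_spec 0 n); [|lia].
      replace ((0+1)/INR n) with (1 / INR n) by lra. apply sq_helper; lra.
    + intros j _ Hj. unfold yw. destruct (Nat.eqb_spec 0 j); [lia|].
      destruct (Nat.eqb_spec 0 (j+1)); [lia|]. reflexivity.
  - rewrite (sumN_two _ _ (S k) k).
    3:{ intros j _ H1 H2. unfold yw. destruct (Nat.eqb_spec (S k) j); [lia|].
      destruct (Nat.eqb_spec (S k) (j+1)); [lia|]. reflexivity. }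
    2: lia.
    assert (Yk: yw n k (S k) = - tt n k).
    { unfold yw. destruct (Nat.eqb_spec (S k) k); [lia|].
      destruct (Nat.eqb_spec (S k) (k+1)); [reflexivity|lia]. }
    assert (Ysk: yw n (S k) (S k) = tt n (S k)) by (unfold yw; rewrite Nat.eqb_refl; reflexivity).
    rewrite Yk, Ysk. unfold Nn, Rn in *.
    destruct (Nat.ltb_spec k (2*n)); [|lia].
    pose proof (S_INR k) as HSk.
    destruct (Nat.ltb_spec (S k) (2*n)).
    + unfold tt. destruct (Nat.ltb_spec (S k) n), (Nat.ltb_spec k n); try lia.
      * replace ((INR (S k) + 1) / INR n + - ((INR k + 1) / INR n)) with (1 / INR n)
          by (rewrite HSk; field; auto). apply sq_helper; lra.
      * assert (S k = n) by lia. subst n.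
        replace ((2 * INR (S k) - INR (S k)) / INR (S k) + - ((INR k + 1) / INR (S k)))
          with (0 / INR (S k)) by (rewrite HSk; field; rewrite <- HSk; auto).
        apply sq_helper; lra.
      * replace ((2 * INR n - INR (S k)) / INR n + - ((2 * INR n - INR k) / INR n))
          with (-1 / INR n) by (rewrite HSk; field; auto). apply sq_helper; lra.
    + assert (S k = 2 * n)%nat by lia.
      assert (HK: INR k + 1 = 2 * INR n) by (rewrite <- HSk, H1, mult_INR; simpl; lra).
      unfold tt. destruct (Nat.ltb_spec k n); [lia|].
      replace (0 + - ((2 * INR n - INR k) / INR n)) with (-1 / INR n)
        by (replace (INR k) with (2 * INR n - 1) by lra; field; auto).
      apply sq_helper; lra.
Qed.
Lemma sq1 m : sumN m (fun k => (INR k + 1) ^ 2) = INR m * (INR m + 1) * (2 * INR m + 1) / 6.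
Proof. induction m. unfold sumN; simpl; lra. rewrite sumN_S, IHm, S_INR. field. Qed.

Lemma sq2 m : sumN m (fun k => (INR m - INR k) ^ 2) = INR m * (INR m + 1) * (2 * INR m + 1) / 6.
Proof. induction m. unfold sumN; simpl; lra. rewrite sumN_front.
  rewrite (sumN_ext _ _ (fun k => (INR m - INR k) ^ 2)).
  rewrite IHm, !S_INR. simpl (INR 0). field.
  intros i _. rewrite !S_INR. ring. Qed.

Lemma dist2_yw n : (3 <= n)%nat ->
  dist2 n zeroy (yw n) = 2 * (INR n + 1) * (2 * INR n + 1) / (3 * INR n).
Proof. intros hn.
  assert (Hn: 3 <= INR n) by (replace 3 with (INR 3) by (simpl; lra); apply le_INR; lia).
  unfold dist2. rewrite (sumN_ext _ _ (fun r => 2 * tt n r ^ 2)).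
  2:{ intros r Hr. unfold Rn in Hr. rewrite (sumN_two _ _ r (r+1)%nat).
    - assert (E1: Nat.ltb r (Nn n) = true) by (apply Nat.ltb_lt; unfold Nn; lia).
      assert (E2: Nat.ltb (r+1) (Nn n) = true) by (apply Nat.ltb_lt; unfold Nn; lia).
      rewrite E1, E2. unfold zeroy, yw. rewrite Nat.eqb_refl.
      assert (E: Nat.eqb (r+1) r = false) by (apply Nat.eqb_neq; lia).
      rewrite E, Nat.eqb_refl. ring.
    - lia.
    - intros j _ H1 H2. unfold zeroy, yw. apply Nat.eqb_neq in H1. apply Nat.eqb_neq in H2.
      rewrite H1, H2. ring. }
  unfold Rn. replace (2 * n)%nat with (n + n)%nat by lia. rewrite sumN_add.
  rewrite (sumN_ext n (fun r => 2 * tt n r ^ 2) (fun k => (2 / INR n ^ 2) * (INR k + 1) ^ 2)).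
  2:{ intros i Hi. unfold tt. destruct (Nat.ltb_spec i n); [|lia]. field. lra. }
  rewrite (sumN_ext n (fun k => 2 * tt n (n + k) ^ 2) (fun k => (2 / INR n ^ 2) * (INR n - INR k) ^ 2)).
  2:{ intros i Hi. unfold tt. destruct (Nat.ltb_spec (n + i) n); [lia|]. rewrite plus_INR. field. lra. }
  rewrite !sumN_scal, sq1, sq2. field. lra.
Qed.

Lemma nsq_yw n : (3 <= n)%nat ->
  nsqN n (fun i => Aop n (yw n) i - Aop n zeroy i) <= (2 * INR n + 1) / INR n ^ 2.
Proof. intros hn. unfold nsqN.
  apply Rle_trans with (sumN (Nn n) (fun _ => 1 / INR n ^ 2)).
  - apply sumN_le. intros i Hi. rewrite Aop_zero, Rminus_0_r. apply Aop_yw_bound; auto.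
  - rewrite sumN_const. unfold Nn. rewrite plus_INR, mult_INR. simpl. lra.
Qed.

Theorem mainTheorem5 (n : nat) (hn : (3 <= n)%nat) :
  exists lstar : R,
    is_lub (admissible n) lstar /\ lstar < 7 / (INR (Nn n)) ^ 2.
Proof.
  assert (Hn: 3 <= INR n) by (replace 3 with (INR 3) by (simpl; lra); apply le_INR; lia).
  set (b := 3 / (2 * INR n * (INR n + 1))).
  assert (Hub: is_upper_bound (admissible n) b).
  { intros l [Hl0 Hl]. pose proof (Hl (yw n) zeroy (yw_inB n hn) (proj_zero n (yw n))) as H.
    rewrite dist2_yw in H by auto. pose proof (nsq_yw n hn).
    set (D := 2 * (INR n + 1) * (2 * INR n + 1) / (3 * INR n)) in *.
    assert (HD: 0 < D) by (unfold D; apply Rdiv_lt_0_compat; nra).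
    apply (Rmult_le_reg_r D); auto.
    replace (b * D) with ((2 * INR n + 1) / INR n ^ 2) by (unfold b, D; field; lra). lra. }
  destruct (completeness (admissible n)) as [lstar Hlub].
  - exists b. exact Hub.
  - exists 0. split. lra. intros y ys _ _. rewrite Rmult_0_l. apply Rle_ge, nsqN_nonneg.
  - exists lstar. split; auto.
    apply Rle_lt_trans with b. apply (proj2 Hlub); auto.
    unfold Nn. rewrite plus_INR, mult_INR. simpl (INR 2). simpl (INR 1).
    apply Rminus_gt_0_lt.
    replace (7 / ((1 + 1) * INR n + 1) ^ 2 - b) with
      ((2 * INR n ^ 2 + 2 * INR n - 3) / (2 * INR n * (INR n + 1) * (2 * INR n + 1) ^ 2))
      by (unfold b; field; split; nra).
    apply Rdiv_lt_0_compat; nra.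
Qed.
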